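(* Let $A$ and $B$ be disjoint cubic graphs with $v(A)\equiv 0\pmod 6$ and $v(B)\equiv 0\pmod 6$, let $a=a_1a_2\in E(A)$ and $b=b_1b_2\in E(B)$. Suppose $A$ has no $\Lambda$-factor containing $a$, and $B$ has no $\Lambda$-factor avoiding $b$. Let $G=AabB$. Then $v(G)\equiv 0\pmod 6$ and $G$ has no $\Lambda$-factor.
   Context: Graphs are finite, undirected, without loops or multiple edges; $v(G)=|V(G)|$. For disjoint graphs $A,B$ with $a=a_1a_2\in E(A)$, $b=b_1b_2\in E(B)$, $AabB$ is obtained from $(A-a)\cup(B-b)$ (edge deletions) by adding the new edges $a_1b_1$ and $a_2b_2$. A $\Lambda$-factor of a graph is a spanning subgraph each of whose components is a path on 3 vertices; it contains (avoids) an edge $e$ if $e$ is (is not) one of its edges. *)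

(* Defs.v *)
From mathcomp Require Import all_boot.
Set Implicit Arguments. Unset Strict Implicit. Unset Printing Implicit Defensive.

Definition simple_graph (T : finType) (e : rel T) : Prop :=
  symmetric e /\ irreflexive e.

Definition cubic (T : finType) (e : rel T) : Prop :=
  forall x : T, #|[set y | e x y]| = 3.

Definition is_edge_uv (T : finType) (u v x y : T) : bool :=
  ((x == u) && (y == v)) || ((x == v) && (y == u)).

(* f is (the edge relation of) a Lambda-factor of the graph e: a spanning
   subgraph (symmetric f contained in e) each of whose connected components
   is a path on 3 vertices u - v - w. *)
Definition lambda_factor (T : finType) (e f : rel T) : Prop :=
  [/\ symmetric f,
      (forall x y, f x y -> e x y) &
      forall x : T, exists u v w : T,
        [/\ u != v, v != w, u != w,
            [set y | connect f x y] = [set u; v; w] &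
            forall p q, p \in [set u; v; w] -> q \in [set u; v; w] ->
              f p q = is_edge_uv u v p q || is_edge_uv v w p q]].

(* The graph A a b B on the disjoint union TA + TB: delete the edges
   a = a1a2 and b = b1b2 and add the edges a1b1 and a2b2. *)
Definition glue (TA TB : finType) (eA : rel TA) (eB : rel TB)
    (a1 a2 : TA) (b1 b2 : TB) : rel (TA + TB) :=
  fun x y =>
    match x, y with
    | inl x, inl y => eA x y && ~~ is_edge_uv a1 a2 x y
    | inr x, inr y => eB x y && ~~ is_edge_uv b1 b2 x y
    | inl x, inr y => ((x == a1) && (y == b1)) || ((x == a2) && (y == b2))
    | inr x, inl y => ((y == a1) && (x == b1)) || ((y == a2) && (x == b2))
    end.

(* Main.v *)
Require Import Defs.
From mathcomp Require Import all_boot zify.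
Set Implicit Arguments. Unset Strict Implicit. Unset Printing Implicit Defensive.

Section Generic.
Variable T : finType.

Definition tri (f : rel T) (u v w : T) :=
  [/\ u != v, v != w, u != w &
   forall p q, p \in [set u; v; w] -> q \in [set u; v; w] ->
     f p q = is_edge_uv u v p q || is_edge_uv v w p q].

Lemma in3 (p u v w : T) : (p \in [set u; v; w]) = [|| p == u, p == v | p == w].
Proof. by rewrite !inE orbA. Qed.

Lemma tri_uv f u v w : tri f u v w -> f u v.
Proof. case=> _ _ _ H; rewrite H ?in3 ?eqxx ?orbT //. by rewrite /is_edge_uv !eqxx. Qed.
Lemma tri_vw f u v w : tri f u v w -> f v w.
Proof. case=> _ _ _ H; rewrite H ?in3 ?eqxx ?orbT //. by rewrite /is_edge_uv !eqxx ?orbT. Qed.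
Lemma tri_wv f u v w : tri f u v w -> f w v.
Proof. case=> _ _ _ H; rewrite H ?in3 ?eqxx ?orbT //. by rewrite /is_edge_uv !eqxx ?orbT. Qed.

Lemma lf_comp (e f : rel T) x : lambda_factor e f ->
  exists u v w, tri f u v w /\ [set y | connect f x y] = [set u;v;w].
Proof. case=> _ _ H; case: (H x) => u [v [w [? ? ? ? ?]]]; by exists u, v, w. Qed.

Lemma lf_intro (e f : rel T) : symmetric f -> (forall x y, f x y -> e x y) ->
  (forall x, exists u v w, [/\ tri f u v w, x \in [set u;v;w] &
      forall p q, p \in [set u;v;w] -> f p q -> q \in [set u;v;w]]) ->
  lambda_factor e f.
Proof.
move=> fs fe H; split=> // x.
have [u [v [w [tr xS cl]]]] := H x.
have tr' := tr; case: tr' => uv vw uw E.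
exists u, v, w; split => //.
have csym : connect_sym f := sym_connect_sym fs.
have cS : forall y, y \in [set u;v;w] -> connect f u y.
  move=> y; rewrite in3 => /or3P[]/eqP->.
  - exact: connect0.
  - apply: connect1; exact: tri_uv tr.
  - apply: connect_trans (connect1 (tri_uv tr)) (connect1 (tri_vw tr)).
have clS : closed f [set u;v;w] by apply: intro_closed => // p q /[swap]; apply: cl.
apply/setP => y; rewrite inE; apply/idP/idP.
- by move=> cxy; rewrite -(closed_connect clS cxy).
- move=> yS; apply: connect_trans (cS y yS); rewrite csym; exact: cS.
Qed.

Lemma lf_neighbor (e f : rel T) p : lambda_factor e f -> exists q, f p q.
Proof.
move=> lf; have [u [v [w [tr E]]]] := lf_comp p lf.
have : p \in [set u; v; w] by rewrite -E inE connect0.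
rewrite in3 => /or3P[]/eqP->.
- by exists v; exact: tri_uv tr.
- by exists w; exact: tri_vw tr.
- by exists v; exact: tri_wv tr.
Qed.

Lemma card3 (u v w : T) : u != v -> v != w -> u != w -> #|[set u; v; w]| = 3.
Proof.
move=> uv vw uw; rewrite setUC cardsU1 cards2 uv !inE negb_or.
by rewrite eq_sym uw eq_sym vw.
Qed.

Lemma count3 (f : rel T) (D : {set T}) : symmetric f ->
  (forall x, #|[set y | connect f x y]| = 3) ->
  (forall x y, x \in D -> connect f x y -> y \in D) -> #|D| %% 3 = 0.
Proof.
move=> fs c3 cl.
have csym : connect_sym f := sym_connect_sym fs.
have eqi : {in D & &, equivalence_rel (connect f)}.
  move=> x y z _ _ _; split; first exact: connect0.
  by move=> cxy; apply/idP/idP => H; [rewrite csym in cxy|]; apply: connect_trans cxy H.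
rewrite (card_partition (equivalence_partitionP eqi)).
rewrite (eq_bigr (fun _ => 3)) ?sum_nat_const ?modnMl //.
move=> B /imsetP[x Dx ->]; rewrite -(c3 x); apply: eq_card => y; rewrite !inE.
by case cxy: (connect f x y); rewrite ?andbT ?andbF //; apply: cl cxy.
Qed.
End Generic.

Section Pull.
Variables (T' T : finType) (h : T' -> T).
Hypothesis hi : injective h.

Lemma in3_inj p u v w : (h p \in [set h u; h v; h w]) = (p \in [set u; v; w]).
Proof. by rewrite !in3 !(inj_eq hi). Qed.

Lemma edge_inj u v p q : is_edge_uv (h u) (h v) (h p) (h q) = is_edge_uv u v p q.
Proof. by rewrite /is_edge_uv !(inj_eq hi). Qed.

Lemma tri_pull (f : rel T) (f' : rel T') u v w : tri f (h u) (h v) (h w) ->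
  (forall p q, p \in [set u; v; w] -> q \in [set u; v; w] -> f' p q = f (h p) (h q)) ->
  tri f' u v w.
Proof.
case=> uv vw uw E H; split; rewrite -?(inj_eq hi) //.
move=> p q pS qS; rewrite H // E ?in3_inj // !edge_inj //.
Qed.
End Pull.

Lemma edge_sym (T : finType) (u v p q : T) : is_edge_uv u v p q = is_edge_uv u v q p.
Proof. rewrite /is_edge_uv; by case: (p == u); case: (q == v); case: (p == v); case: (q == u). Qed.
Lemma inl_eq (A B : eqType) (x y : A) : (inl x == inl y :> A + B) = (x == y).
Proof. by apply/eqP/eqP => [[]|->]. Qed.
Lemma inr_eq (A B : eqType) (x y : B) : (inr x == inr y :> A + B) = (x == y).
Proof. by apply/eqP/eqP => [[]|->]. Qed.

Definition isl (A B : Type) (z : A + B) : bool := if z is inl _ then true else false.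

Section Main.
Variables (TA TB : finType) (eA : rel TA) (eB : rel TB) (a1 a2 : TA) (b1 b2 : TB).
Hypotheses (sA : simple_graph eA) (sB : simple_graph eB).
Variable f : rel (TA + TB).
Hypothesis hf : lambda_factor (glue eA eB a1 a2 b1 b2) f.

Local Notation g := (glue eA eB a1 a2 b1 b2).
Local Notation c1 := (f (inl a1) (inr b1)).
Local Notation c2 := (f (inl a2) (inr b2)).
Local Notation comp x := [set y | connect f x y].

Lemma f_g x y : f x y -> g x y.
Proof. by case: hf => _ H _; apply: H. Qed.
Lemma f_sym : symmetric f.
Proof. by case: hf. Qed.
Lemma csym : connect_sym f.
Proof. exact: sym_connect_sym f_sym. Qed.
Lemma f_irr x : f x x = false.
Proof.
apply/negbTE/negP => /f_g; case: x => x /=.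
- by rewrite sA.2.
- by rewrite sB.2.
Qed.
Lemma comp3 x : #|comp x| = 3.
Proof. have [u [v [w [[? ? ? _] ->]]]] := lf_comp x hf; exact: card3. Qed.
Lemma cross x y : f (inl x) (inr y) -> (x == a1) && (y == b1) || (x == a2) && (y == b2).
Proof. by move/f_g. Qed.

Lemma F x y : isl x -> ~~ isl y -> connect f x y ->
  (c1 && connect f x (inl a1)) || (c2 && connect f x (inl a2)).
Proof.
move=> + + /connectP[p]; elim: p x => [|z p IH] x /=.
- by move=> lx ly _ ey; rewrite ey lx in ly.
- move=> lx ly /andP[fxz pz] ey.
  case lz: (isl z).
  + case/orP: (IH z lz ly pz ey) => /andP[c h]; apply/orP; [left|right];
      rewrite c; exact: connect_trans (connect1 fxz) h.
  + case: x lx fxz ey => // x _; case: z lz pz => // z _ pz fxz ey.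
    have /orP[/andP[/eqP ex /eqP ez]|/andP[/eqP ex /eqP ez]] := cross fxz;
      rewrite ex ez in fxz *; rewrite fxz connect0 ?orbT //.
Qed.

Definition D := [set z | isl z && [forall y, connect f z y ==> isl y]].

Lemma D_closed x y : x \in D -> connect f x y -> y \in D.
Proof.
rewrite !inE => /andP[_ /forallP H] cxy; rewrite (implyP (H y) cxy) /=.
apply/forallP => t; apply/implyP => cyt; exact: (implyP (H t) (connect_trans cxy cyt)).
Qed.

Lemma notD_a1 : c1 -> inl a1 \notin D.
Proof.
move=> h; rewrite inE /=; apply/forallPn; exists (inr b1); by rewrite connect1.
Qed.
Lemma notD_a2 : c2 -> inl a2 \notin D.
Proof.
move=> h; rewrite inE /=; apply/forallPn; exists (inr b2); by rewrite connect1.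
Qed.

Lemma D_or x : isl x -> x \notin D ->
  (c1 && connect f x (inl a1)) || (c2 && connect f x (inl a2)).
Proof.
move=> lx; rewrite inE lx /= => /forallPn[y]; rewrite negb_imply => /andP[cxy ly].
exact: F lx ly cxy.
Qed.

Lemma comp_closed x p q : p \in comp x -> f p q -> q \in comp x.
Proof. rewrite !inE => cxp fpq; exact: connect_trans cxp (connect1 fpq). Qed.

Lemma pull (T' : finType) (h : T' -> TA + TB) (hi : injective h) (f' : rel T') x :
  (forall t, connect f (h x) t -> exists t', t = h t') ->
  (forall p q, connect f (h x) (h p) -> f' p q = f (h p) (h q)) ->
  exists u v w, [/\ tri f' u v w, x \in [set u;v;w] &
      forall p q, p \in [set u;v;w] -> f' p q -> q \in [set u;v;w]].
Proof.
move=> Hr Hf; have [u [v [w [tr E]]]] := lf_comp (h x) hf.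
have mem t : t \in [set u; v; w] -> connect f (h x) t by rewrite -E inE.
have uS : u \in [set u; v; w] by rewrite in3 eqxx.
have vS : v \in [set u; v; w] by rewrite in3 eqxx orbT.
have wS : w \in [set u; v; w] by rewrite in3 eqxx !orbT.
have [u' eu] := Hr u (mem u uS).
have [v' ev] := Hr v (mem v vS).
have [w' ew] := Hr w (mem w wS).
subst u v w; exists u', v', w'; split.
- apply: (tri_pull hi tr) => p q pS _; apply: Hf; apply: mem; by rewrite in3_inj.
- by rewrite -(in3_inj hi) -E inE connect0.
- move=> p q pS fpq; rewrite -(in3_inj hi) -E.
  have cp : h p \in comp (h x) by rewrite E in3_inj.
  apply: (comp_closed cp); rewrite -Hf //; by rewrite inE in cp.
Qed.


Local Notation L := [set z : TA + TB | isl z].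

Lemma case0 : ~~ c1 -> ~~ c2 -> exists fB, lambda_factor eB fB /\ ~~ fB b1 b2.
Proof.
move=> n1 n2; exists (fun x y => f (inr x) (inr y)); split; last first.
  by apply/negP => /f_g /=; rewrite /is_edge_uv !eqxx andbF.
apply: lf_intro.
- move=> x y /=; exact: f_sym.
- by move=> x y /f_g /= /andP[].
- have inj : injective (@inr TA TB) by move=> ? ? [].
  move=> x; apply: (pull inj) => [t cxt|p q _ //].
  case: t cxt => [t|t] cxt; last by exists t.
  have cc : connect f (inl t) (inr x) by rewrite csym.
  have := F (isT : isl (inl t)) (isT : ~~ isl (inr x)) cc.
  by rewrite (negbTE n1) (negbTE n2).
Qed.

Lemma L_card : #|L| = #|TA|.
Proof.
have -> : L = inl @: [set: TA].
  apply/setP => [[z|z]]; rewrite !inE /=.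
  - by apply/esym/imsetP; exists z.
  - by apply/esym/negP => /imsetP[y _].
by rewrite card_imset ?cardsT //; move=> ? ? [].
Qed.

Lemma CL_bounds x y : f (inl x) (inr y) -> 0 < #|comp (inl x) :&: L| < 3.
Proof.
move=> fxy; have := cardsID L (comp (inl x)); rewrite comp3.
have h1 : 0 < #|comp (inl x) :&: L| by apply/card_gt0P; exists (inl x); rewrite !inE connect0.
have h2 : 0 < #|comp (inl x) :\: L| by apply/card_gt0P; exists (inr y); rewrite !inE connect1.
lia.
Qed.

Lemma inD_L z : z \in D -> isl z.
Proof. by rewrite inE => /andP[]. Qed.

Lemma LD : L :&: D = D.
Proof.
apply/setP => z; rewrite in_setI; case zD: (z \in D); rewrite ?andbF // andbT inE.
exact: inD_L zD.
Qed.

Lemma case1 : c1 -> ~~ c2 -> #|TA| %% 3 = 0 -> False.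
Proof.
move=> h1 h2 hT.
have eq1 : L :\: D = comp (inl a1) :&: L.
  apply/setP => z; rewrite in_setD in_setI [z \in L]inE [z \in comp _]inE; case lz : (isl z); rewrite ?andbF ?andbT //=.
  apply/idP/idP.
  - move=> nD; have := D_or lz nD; rewrite (negbTE h2) orbF => /andP[_]; by rewrite csym.
  - move=> c; apply: contraNN (notD_a1 h1) => zD; apply: D_closed zD _; by rewrite csym.
have := cardsID D L; rewrite eq1 LD.
have := count3 f_sym comp3 D_closed.
have := CL_bounds h1. rewrite L_card. lia.
Qed.

Hypotheses (ha : eA a1 a2) (hb : eB b1 b2).

Lemma noconn : c1 -> c2 -> ~ connect f (inl a1) (inl a2).
Proof.
move=> h1 h2 c.
have a12 : a1 != a2 by apply: contraTneq ha => ->; rewrite sA.2.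
have b12 : b1 != b2 by apply: contraTneq hb => ->; rewrite sB.2.
have HL : [set inl a1; inl a2] \subset comp (inl a1) :&: L.
  by apply/subsetP => z; rewrite !inE => /orP[]/eqP->; rewrite /= ?connect0 ?c.
have HR : [set inr b1; inr b2] \subset comp (inl a1) :\: L.
  apply/subsetP => z; rewrite !inE => /orP[]/eqP->; rewrite /=;
    [exact: connect1 h1 | exact: connect_trans c (connect1 h2)].
have := subset_leq_card HL; have := subset_leq_card HR.
rewrite !cards2 inl_eq inr_eq a12 b12.
have := cardsID L (comp (inl a1)); rewrite comp3. lia.
Qed.

Lemma count2 : c1 -> c2 -> #|TA| %% 3 = 0 ->
  (#|comp (inl a1) :&: L| = 2 /\ #|comp (inl a2) :&: L| = 1) \/
  (#|comp (inl a1) :&: L| = 1 /\ #|comp (inl a2) :&: L| = 2).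
Proof.
move=> h1 h2 hT; have nc := noconn h1 h2.
have eq1 : L :\: D = (comp (inl a1) :&: L) :|: (comp (inl a2) :&: L).
  apply/setP => z; rewrite in_setD in_setU !in_setI [z \in L]inE [z \in comp (inl a1)]inE [z \in comp (inl a2)]inE; case lz : (isl z); rewrite ?andbF ?andbT //=.
  apply/idP/idP.
  - move=> nD; have := D_or lz nD; by case/orP => /andP[_]; rewrite csym => ->; rewrite ?orbT.
  - case/orP => c.
    + apply: contraNN (notD_a1 h1) => zD; apply: D_closed zD _; by rewrite csym.
    + apply: contraNN (notD_a2 h2) => zD; apply: D_closed zD _; by rewrite csym.
have disj : (comp (inl a1) :&: L) :&: (comp (inl a2) :&: L) = set0.
  apply/setP => z; rewrite !inE; apply/negbTE/negP => /andP[/andP[ca _] /andP[cb _]].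
  apply: nc; apply: connect_trans ca _; by rewrite csym.
have := cardsID D L; rewrite eq1 LD.
have := cardsU (comp (inl a1) :&: L) (comp (inl a2) :&: L); rewrite disj cards0.
have := count3 f_sym comp3 D_closed.
have := CL_bounds h1; have := CL_bounds h2. rewrite L_card. lia.
Qed.


Lemma case2 : c1 -> c2 -> #|comp (inl a1) :&: L| = 2 -> #|comp (inl a2) :&: L| = 1 ->
  exists fA, lambda_factor eA fA /\ fA a1 a2.
Proof.
move=> h1 h2 n1 n2.
have nc := noconn h1 h2.
have a12 : a1 != a2 by apply: contraTneq ha => ->; rewrite sA.2.
have a1C : inl a1 \in comp (inl a1) :&: L by rewrite !inE connect0.
have /cards1P[z ez] : #|(comp (inl a1) :&: L) :\ inl a1| == 1.
  by apply/eqP; move: (cardsD1 (inl a1) (comp (inl a1) :&: L)); rewrite a1C n1 /=; lia.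
have zin : z \in (comp (inl a1) :&: L) :\ inl a1 by rewrite ez set11.
case: z ez zin => [x0|z] ez zin; last by move: zin; rewrite !inE /= andbF.
move: (zin); rewrite !inE inl_eq andbT => /andP[x0ne hx0].
have memC1 q : connect f (inl a1) (inl q) -> q = a1 \/ q = x0.
  move=> cq; case: (eqVneq q a1) => [->|nq]; [by left|right].
  have : inl q \in (comp (inl a1) :&: L) :\ inl a1 by rewrite !inE inl_eq nq cq.
  by rewrite ez inE inl_eq => /eqP.
have memC2 q : connect f (inl a2) (inl q) -> q = a2.
  move: n2 => /eqP/cards1P[z2 ez2] cq.
  have : inl a2 \in comp (inl a2) :&: L by rewrite !inE connect0.
  have : inl q \in comp (inl a2) :&: L by rewrite !inE cq.
  by rewrite ez2 !inE => /eqP<- /eqP[]->.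
have x0ne2 : x0 != a2.
  by apply/negP => /eqP ex; rewrite ex in hx0; apply: nc.
have fx0 : f (inl x0) (inl a1).
  have [q fq] := lf_neighbor (inl x0) hf.
  have cq : connect f (inl a1) q := connect_trans hx0 (connect1 fq).
  case: q fq cq => [q|q] fq cq.
  - by case: (memC1 q cq) => eq; subst q; rewrite ?f_irr in fq.
  - by have := cross fq; rewrite (negbTE x0ne) (negbTE x0ne2).
have hS p q : p \in [set x0; a1; a2] -> connect f (inl p) (inl q) -> q \in [set x0; a1; a2].
  rewrite !in3 => /or3P[]/eqP-> cq.
  - by case: (memC1 q (connect_trans hx0 cq)) => ->; rewrite eqxx ?orbT.
  - by case: (memC1 q cq) => ->; rewrite eqxx ?orbT.
  - by rewrite (memC2 q cq) eqxx ?orbT.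
have notS_D p : p \notin [set x0; a1; a2] -> inl p \in D.
  move=> pn; apply/negPn/negP => nD; move: pn; have := D_or (isT : isl (inl p)) nD.
  case/orP => /andP[_ c]; rewrite csym in c.
  - by case: (memC1 p c) => ->; rewrite in3 eqxx ?orbT.
  - by rewrite (memC2 p c) in3 eqxx ?orbT.
have a1D := notD_a1 h1; have a2D := notD_a2 h2.
exists (fun p q => f (inl p) (inl q) || is_edge_uv a1 a2 p q); split; last first.
  by rewrite /is_edge_uv !eqxx orbT.
apply: lf_intro.
- by move=> p q /=; rewrite f_sym edge_sym.
- move=> p q /orP[/f_g /= /andP[] // | e].
  by case/orP: e => /andP[/eqP-> /eqP->] //; rewrite sA.1.
- move=> x; case xS : (x \in [set x0; a1; a2]).
  + exists x0, a1, a2; split => //.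
    * have e01 : (x0 == a1) = false by apply/negbTE.
      have e10 : (a1 == x0) = false by rewrite eq_sym.
      have e02 : (x0 == a2) = false by apply/negbTE.
      have e20 : (a2 == x0) = false by rewrite eq_sym.
      have e12 : (a1 == a2) = false by apply/negbTE.
      have e21 : (a2 == a1) = false by rewrite eq_sym.
      have f10 : f (inl a1) (inl x0) by rewrite f_sym.
      have f12 : f (inl a1) (inl a2) = false by apply/negbTE/negP => /connect1.
      have f21 : f (inl a2) (inl a1) = false by rewrite f_sym.
      have f02 : f (inl x0) (inl a2) = false.
        by apply/negbTE/negP => /connect1 c; apply: nc; exact: connect_trans hx0 c.
      have f20 : f (inl a2) (inl x0) = false by rewrite f_sym.
      split => //.
      move=> p q; rewrite !in3 => /or3P[]/eqP-> /or3P[]/eqP->;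
        rewrite /is_edge_uv ?eqxx ?f_irr ?fx0 ?f10 ?f12 ?f21 ?f02 ?f20
          ?e01 ?e10 ?e02 ?e20 ?e12 ?e21 //.
    * move=> p q pS /orP[fpq|e]; first exact: hS pS (connect1 fpq).
      by case/orP: e => /andP[_ /eqP->]; rewrite in3 eqxx ?orbT.
  + have xD : inl x \in D by apply: notS_D; rewrite xS.
    have inj : injective (@inl TA TB) by move=> ? ? [].
    apply: (pull inj) => [t ct|p q cp].
    * case: t ct => [t|t] ct; first by exists t.
      by have := inD_L (D_closed xD ct).
    * have pD := D_closed xD cp.
      have pa1 : (p == a1) = false.
        by apply/negbTE; apply: contraNneq a1D => <-.
      have pa2 : (p == a2) = false.
        by apply/negbTE; apply: contraNneq a2D => <-.
      by rewrite /is_edge_uv pa1 pa2 /= orbF.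
Qed.

End Main.

Lemma glue_swap (TA TB : finType) (eA : rel TA) (eB : rel TB) a1 a2 b1 b2 x y :
  glue eA eB a2 a1 b2 b1 x y = glue eA eB a1 a2 b1 b2 x y.
Proof.
case: x => x; case: y => y /=; by rewrite /is_edge_uv orbC.
Qed.

Lemma lf_mono (T : finType) (e e' f : rel T) :
  (forall x y, e x y -> e' x y) -> lambda_factor e f -> lambda_factor e' f.
Proof. move=> H [s sub c]; split => // x y /sub; exact: H. Qed.

Theorem mainTheorem13 (TA TB : finType) (eA : rel TA) (eB : rel TB)
    (a1 a2 : TA) (b1 b2 : TB) :
  simple_graph eA -> simple_graph eB -> cubic eA -> cubic eB ->
  #|TA| %% 6 = 0 -> #|TB| %% 6 = 0 ->
  eA a1 a2 -> eB b1 b2 ->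
  ~ (exists f, lambda_factor eA f /\ f a1 a2) ->
  ~ (exists f, lambda_factor eB f /\ ~~ f b1 b2) ->
  #|((TA + TB)%type : finType)| %% 6 = 0 /\ ~ (exists f, lambda_factor (glue eA eB a1 a2 b1 b2) f).
Proof.
move=> sA sB _ _ hA6 hB6 ha hb nA nB; split.
  rewrite card_sum; lia.
case=> f hf.
have hT : #|TA| %% 3 = 0 by lia.
have hf' : lambda_factor (glue eA eB a2 a1 b2 b1) f.
  by apply: lf_mono hf => x y; rewrite glue_swap.
have ha' : eA a2 a1 by rewrite sA.1.
have hb' : eB b2 b1 by rewrite sB.1.
case h1 : (f (inl a1) (inr b1)); case h2 : (f (inl a2) (inr b2)).
- case: (count2 sA sB hf ha hb h1 h2 hT) => [[n1 n2]|[n1 n2]].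
  + by apply: nA; have := case2 sA sB hf ha hb h1 h2 n1 n2.
  + have [fA [lfA fa]] := case2 sA sB hf' ha' hb' h2 h1 n2 n1.
    apply: nA; exists fA; split => //; case: lfA => s _ _; by rewrite s.
- exact: case1 hf h1 (negbT h2) hT.
- exact: case1 hf' h2 (negbT h1) hT.
- apply: nB; exact: case0 hf (negbT h1) (negbT h2).
Qed.
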